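(* Consider a cooperative multi-agent MDP with $N$ agents, finite individual state space $\mathcal S$ and finite individual action space $\mathcal A$ whose reward $\mathrm r$ and transition kernel $\mathbb P$ satisfy $\mathrm r(\mathbf s,\mathbf a)=\mathrm r(\kappa(\mathbf s),\kappa(\mathbf a))$ and $\mathbb P(\mathbf s'\mid\mathbf s,\mathbf a)=\mathbb P(\kappa(\mathbf s')\mid\kappa(\mathbf s),\kappa(\mathbf a))$ for all joint states/actions and all permutations $\kappa$ of the agents, and let $\nu(\mathbf a\mid\mathbf s)=\prod_{i=1}^N\mu(a_i\mid s_i)$ be a factorized policy with a shared local map $\mu$. Fix an agent, write its state as $s$ and the states of the remaining $N-1$ agents as $\mathbf s_r\in\mathcal S^{N-1}$, and write $V^\nu(s,\mathbf s_r)$ for the value of the corresponding joint state. Then for every permutation $\kappa$ of the remaining agents, $V^\nu(s,\mathbf s_r)=V^\nu(s,\kappa(\mathbf s_r))$. Moreover, there exists a function $g_\nu$ such that $V^\nu(s,\mathbf s_r)=g_\nu(s,\hat{\mathrm p}_{\mathbf s_r})$ for all $s,\mathbf s_r$, where $\hat{\mathrm p}_{\mathbf s_r}=\frac1N\sum_{s'\in\mathbf s_r}\delta_{s'}$.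
   Context: $\delta_x$ denotes the Dirac measure at $x$; the sum over $s'\in\mathbf s_r$ runs over the $N-1$ coordinates of $\mathbf s_r$ with multiplicity. The value function is $V^\nu(\mathbf s)=(1-\gamma)\mathbb E\{\sum_{t\ge0}\gamma^t\mathrm r(\mathbf s_t,\mathbf a_t)\mid \mathbf s_0=\mathbf s,\ \mathbf a_t\sim\nu(\cdot\mid\mathbf s_t)\}$ for a discount factor $\gamma\in(0,1)$. *)

(* Defs.v *)
From HB Require Import structures.
From mathcomp Require Import all_boot all_order all_algebra perm.
From mathcomp Require Import all_classical all_reals all_analysis.
Set Implicit Arguments. Unset Strict Implicit. Unset Printing Implicit Defensive.
Import Order.TTheory GRing.Theory Num.Theory.
Local Open Scope ring_scope.

Section MAMDP.
Variables (R : realType) (S A : finType) (N : nat).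

Definition jstate := {ffun 'I_N -> S}.
Definition jaction := {ffun 'I_N -> A}.

Definition permute (T : Type) (M : nat) (k : {perm 'I_M}) (x : {ffun 'I_M -> T})
  : {ffun 'I_M -> T} := [ffun i => x (k i)].

Definition fact_policy (mu : S -> A -> R) (s : jstate) (a : jaction) : R :=
  \prod_(i < N) mu (s i) (a i).

Variables (r : jstate -> jaction -> R) (P : jstate -> jaction -> jstate -> R)
          (nu : jstate -> jaction -> R).

Definition r_pol (s : jstate) : R := \sum_(a : jaction) nu s a * r s a.

Definition K_pol (s s' : jstate) : R := \sum_(a : jaction) nu s a * P s a s'.

Fixpoint expect_t (t : nat) (f : jstate -> R) : jstate -> R :=
  match t with
  | O => f
  | t'.+1 => fun s => \sum_(s' : jstate) K_pol s s' * expect_t t' f s'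
  end.

(* V^nu(s) = (1-gamma) E[ sum_t gamma^t r(s_t,a_t) | s_0 = s ]
          = (1-gamma) sum_t gamma^t E[ r(s_t,a_t) | s_0 = s ] *)
Definition value (gamma : R) (s : jstate) : R :=
  (1 - gamma) * limn (fun m => \sum_(t < m) gamma ^+ t * expect_t t r_pol s).

End MAMDP.

(* joint state of n.+1 agents: agent i in state s, the others in sr
   (the remaining agents enumerated in increasing order via unlift) *)
Definition join (S : Type) (n : nat) (i : 'I_n.+1) (s : S) (sr : {ffun 'I_n -> S})
  : {ffun 'I_n.+1 -> S} :=
  [ffun k => if unlift i k is Some j then sr j else s].

(* empirical measure (1/N) sum_{s' in sr} delta_{s'}, N = n.+1 agents in total *)
Definition empirical (R : realType) (S : finType) (n : nat) (sr : {ffun 'I_n -> S})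
  : {ffun S -> R} :=
  [ffun x => (n.+1)%:R^-1 * \sum_(j < n) (sr j == x)%:R].

(* Main.v *)
Require Import Defs.
From HB Require Import structures.
From mathcomp Require Import all_boot all_order all_algebra perm.
From mathcomp Require Import all_classical all_reals all_analysis.
Import Order.TTheory GRing.Theory Num.Theory.
Local Open Scope ring_scope.

Lemma permute_inj (T : Type) M (k : {perm 'I_M}) : injective (@permute T M k).
Proof.
move=> x y /ffunP H; apply/ffunP => j.
have := H ((k^-1)%g j); rewrite /permute !ffunE permKV; done.
Qed.

Lemma count_sum (S : finType) n (sr : {ffun 'I_n -> S}) x :
  count_mem x [seq sr j | j <- enum 'I_n] = (\sum_(j < n) (sr j == x))%N.
Proof.
rewrite -sum1_count big_map big_enum_cond /= big_mkcond /=.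
by apply: eq_bigr => j _; case: (sr j == x).
Qed.

Lemma expect_perm (R : realType) (S A : finType) (n : nat)
  (r : jstate S n -> jaction A n -> R)
  (P : jstate S n -> jaction A n -> jstate S n -> R) (mu : S -> A -> R)
  (hr : forall (k : {perm 'I_n}) s a, r (permute k s) (permute k a) = r s a)
  (hPk : forall (k : {perm 'I_n}) s a s',
      P (permute k s) (permute k a) (permute k s') = P s a s')
  (k : {perm 'I_n}) t s :
  expect_t P (fact_policy mu) t (r_pol r (fact_policy mu)) (permute k s)
  = expect_t P (fact_policy mu) t (r_pol r (fact_policy mu)) s.
Proof.
have hnu : forall s a, fact_policy mu (permute k s) (permute k a) = fact_policy mu s a.
  move=> s0 a; rewrite /fact_policy.
  rewrite (reindex_inj (@perm_inj _ (k^-1)%g)) /=.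
  by apply: eq_bigr => j _; rewrite !ffunE permKV.
elim: t s => [|t IH] s /=.
  rewrite /r_pol (reindex_inj (@permute_inj A n k)) /=.
  by apply: eq_bigr => a _; rewrite hnu hr.
rewrite (reindex_inj (@permute_inj S n k)) /=.
apply: eq_bigr => s' _; rewrite IH; congr (_ * _).
rewrite /K_pol (reindex_inj (@permute_inj A n k)) /=.
by apply: eq_bigr => a _; rewrite hnu hPk.
Qed.

Lemma join_perm (S : Type) n (i : 'I_n.+1) (s : S) (sr : {ffun 'I_n -> S}) (k : {perm 'I_n}) :
  join i s (permute k sr) = permute (lift_perm i i k) (join i s sr).
Proof.
apply/ffunP => m; rewrite !ffunE.
case: (unliftP i m) => [j ->|->].
  by rewrite lift_perm_lift liftK ffunE.
by rewrite lift_perm_id unlift_none.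
Qed.

Lemma emp_perm (R : realType) (S : finType) n (sr1 sr2 : {ffun 'I_n -> S}) :
  empirical R sr1 = empirical R sr2 -> exists k : {perm 'I_n}, sr2 = permute k sr1.
Proof.
move=> /ffunP H.
have Hc : forall x, count_mem x [seq sr2 j | j <- enum 'I_n] = count_mem x [seq sr1 j | j <- enum 'I_n].
  move=> x; have := H x; rewrite !ffunE => h.
  have h2 : (\sum_(j < n) (sr1 j == x)%:R) = (\sum_(j < n) (sr2 j == x)%:R :> R).
    apply: (mulfI _ h); by rewrite invr_eq0 pnatr_eq0.
  rewrite !count_sum; apply/eqP; rewrite -(eqr_nat R) !natr_sum -h2.
  done.
have : perm_eq [seq sr2 j | j <- enum 'I_n] [tuple sr1 j | j < n].
  rewrite /perm_eq; apply/allP => x _ /=; apply/eqP; rewrite Hc.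
  by [].
move/tuple_permP => [p Hp]; exists p; apply/ffunP => j; rewrite ffunE.
have := congr1 (fun s => nth (sr1 j) s j) Hp.
rewrite /= (nth_map j) ?size_enum_ord ?ltn_ord // nth_ord_enum.
rewrite (nth_map j) ?size_enum_ord ?ltn_ord // nth_ord_enum tnth_mktuple.
done.
Qed.
Theorem proposition2 (R : realType) (S A : finType) (n : nat)
  (r : jstate S n.+1 -> jaction A n.+1 -> R)
  (P : jstate S n.+1 -> jaction A n.+1 -> jstate S n.+1 -> R)
  (mu : S -> A -> R) (gamma : R)
  (hgamma : 0 < gamma < 1)
  (hP0 : forall s a s', 0 <= P s a s')
  (hP1 : forall s a, \sum_(s' : jstate S n.+1) P s a s' = 1)
  (hmu0 : forall x b, 0 <= mu x b)
  (hmu1 : forall x, \sum_(b : A) mu x b = 1)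
  (hr : forall (k : {perm 'I_n.+1}) s a, r (permute k s) (permute k a) = r s a)
  (hPk : forall (k : {perm 'I_n.+1}) s a s',
      P (permute k s) (permute k a) (permute k s') = P s a s')
  (i : 'I_n.+1) :
  let V := value r P (fact_policy mu) gamma in
  (forall (s : S) (sr : {ffun 'I_n -> S}) (k : {perm 'I_n}),
      V (join i s sr) = V (join i s (permute k sr)))
  /\
  (exists g : S -> {ffun S -> R} -> R,
      forall (s : S) (sr : {ffun 'I_n -> S}),
        V (join i s sr) = g s (empirical R sr)).
Proof.
move=> V.
have HV : forall (k : {perm 'I_n.+1}) s, V (permute k s) = V s.
  move=> k s; rewrite /V /value.
  have -> : (fun m => \sum_(t < m) gamma ^+ t * expect_t P (fact_policy mu) t (r_pol r (fact_policy mu)) (permute k s))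
    = (fun m => \sum_(t < m) gamma ^+ t * expect_t P (fact_policy mu) t (r_pol r (fact_policy mu)) s) => //.
  apply: funext => m; apply: eq_bigr => t _.
  by rewrite (@expect_perm _ _ _ _ _ _ _ hr hPk).
have P1 : forall (s : S) (sr : {ffun 'I_n -> S}) (k : {perm 'I_n}),
    V (join i s sr) = V (join i s (permute k sr)).
  by move=> s sr k; rewrite join_perm HV.
split => //.
exists (fun s p => match pselect (exists sr, empirical R sr = p) with
                   | left h => V (join i s (projT1 (cid h)))
                   | right _ => 0 end).
move=> s sr.
case: pselect => [h|h]; last by exfalso; apply: h; exists sr.
case: (cid h) => sr0 /= Hsr0.
have [k Hk] := @emp_perm R S n sr0 sr Hsr0.
rewrite Hk; exact: (esym (P1 s sr0 k)).
Qed.
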